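(* Let $f\in H_{d,n}$ be a centered random polynomial with $O(n+1)$-invariant distribution and let $n'\le n$ be a positive integer. Then the restriction $f'\in H_{d,n'}$ of $f$ to $\mathbb{R}^{n'+1}$ (obtained by substituting $X_{n'+1}=\cdots=X_n=0$) is $O(n'+1)$-invariant and has the same parameter, $\delta(f')=\delta(f)$. Moreover, if $f$ is Kostlan distributed, then so is $f'$.
   Context: $H_{d,n}$ is the space of homogeneous real polynomials of degree $d$ in $X_0,\ldots,X_n$, with $O(n+1)$ acting by $(gf)(X)=f(g^{-1}X)$; $f$ is $O(n+1)$-invariant if $gf$ has the same distribution as $f$ for all $g$. The parameter is $\delta(f)=\mathbb{E}(\partial_{X_k}f(q))^2/\mathbb{E}f(q)^2$ with $q=(1,0,\ldots,0)$, $1\le k\le n$ (equivalently $\mathbb{E}\|Df(x)\|^2/(n\,\mathbb{E}f(x)^2)$ for $x\in S^n$, $Df(x)$ the derivative of $f|_{S^n}$). $f=\sum_{|\alpha|=d}f_\alpha X^\alpha$ is Kostlan distributed if the coefficients $f_\alpha$ are independent centered Gaussian with variance $\frac{d!}{\alpha_0!\cdots\alpha_n!}$. *)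

(* Defs.v *)
From HB Require Import structures.
From mathcomp Require Import all_boot all_order all_algebra.
From mathcomp Require Import mpoly.
From mathcomp Require Import all_classical all_reals all_analysis.

Set Implicit Arguments.
Unset Strict Implicit.
Unset Printing Implicit Defensive.

Import Order.TTheory GRing.Theory Num.Theory.

Local Open Scope classical_set_scope.
Local Open Scope ring_scope.

Notation hpoly R n := (mpoly.mpoly n.+1 R).

Section RandomForms.
Context {R : realType}.


Definition Xvar n (i : 'I_n.+1) : hpoly R n := mpoly.mpolyX R (mpoly.mnm1 i).

Definition in_H (d n : nat) (p : hpoly R n) : Prop :=
  forall m : mpoly.multinom n.+1, mpoly.mdeg m != d -> mpoly.mcoeff m p = 0.

(** Exponent vectors alpha with |alpha| = d : the coordinates of H_{d,n}. *)
Definition dmon (n d : nat) := {m : mpoly.multinom n.+1 | mpoly.mdeg m == d}.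

Definition coefm n (m : mpoly.multinom n.+1) (p : hpoly R n) : R := mpoly.mcoeff m p.

Definition coefvec n d (p : hpoly R n) : dmon n d -> R := fun m => coefm (val m) p.

(** Borel (product) sigma-algebra on the coordinate space R^{dmon n d}:
    generated by the measurable rectangles. *)
Definition rects (I : Type) : set (set (I -> R)) :=
  [set B | exists A : I -> set R,
     (forall i, measurable (A i)) /\ B = [set c | forall i, A i (c i)]].

Definition same_law {dT} {T : measurableType dT} (P : probability T R)
  n d (F G : T -> hpoly R n) : Prop :=
  forall B : set (dmon n d -> R), <<s (@rects (dmon n d)) >> B ->
    P ((fun w => @coefvec n d (F w)) @^-1` B) = P ((fun w => @coefvec n d (G w)) @^-1` B).

Definition orthogonal_mx n (g : 'M[R]_n.+1) : Prop := g *m g^T = 1%:M.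

Definition Oact n (g : 'M[R]_n.+1) (p : hpoly R n) : hpoly R n :=
  mpoly.comp_mpoly [tuple \sum_(j < n.+1) invmx g i j *: Xvar j | i < n.+1] p.

Definition Oinvariant {dT} {T : measurableType dT} (P : probability T R)
  n d (F : T -> hpoly R n) : Prop :=
  forall g : 'M[R]_n.+1, orthogonal_mx g -> same_law P d F (fun w => Oact g (F w)).

Definition restrict_poly n n' (p : hpoly R n) : hpoly R n' :=
  mpoly.comp_mpoly
    [tuple (if (i <= n')%N then Xvar (inord i : 'I_n'.+1) else 0) | i < n.+1] p.

Definition qpt n : 'I_n.+1 -> R := fun i => if i == ord0 then 1 else 0.

Definition delta_param {dT} {T : measurableType dT} (P : probability T R)
  n (F : T -> hpoly R n) (k : nat) : \bar R :=
  ('E_P[fun w => ((mpoly.meval (@qpt n) (mpoly.mderiv (inord k) (F w))) ^+ 2)%R]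
   * ('E_P[fun w => ((mpoly.meval (@qpt n) (F w)) ^+ 2)%R])^-1)%E.

Definition mutually_independent {dT} {T : measurableType dT}
  (P : probability T R) (I : eqType) (X : I -> T -> R) : Prop :=
  forall (J : seq I) (A : I -> set R), uniq J -> (forall i, measurable (A i)) ->
    P [set w | forall i, i \in J -> A i (X i w)]
    = (\prod_(i <- J) P (X i @^-1` A i))%E.

Definition kostlan_distributed {dT} {T : measurableType dT} (P : probability T R)
  n d (F : T -> hpoly R n) : Prop :=
  (forall w, in_H d (F w)) /\
  mutually_independent P (fun m : dmon n d => fun w => coefm (val m) (F w)) /\
  (forall (m : dmon n d) (A : set R), measurable A ->
     P ((fun w => coefm (val m) (F w)) @^-1` A)
     = normal_prob 0
         (Num.sqrt ((d`!)%:R / (\prod_(i < n.+1) ((val m) i)`!)%:R)) A).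

End RandomForms.

(* Main.v *)
Require Import Defs.
From HB Require Import structures.
From mathcomp Require Import all_boot all_order all_algebra.
From mathcomp Require Import mpoly.
From mathcomp Require Import all_classical all_reals all_analysis.
Import Order.TTheory GRing.Theory Num.Theory.
Local Open Scope classical_set_scope.
Local Open Scope ring_scope.
Set Implicit Arguments. Unset Strict Implicit. Unset Printing Implicit Defensive.
Section Alg.
Context {R : realType}.
Variables (n n' : nat).
Hypothesis Hn : (n' <= n)%N.

Definition extm (m : 'X_{1..n'.+1}) : 'X_{1..n.+1} :=
  [multinom (if (i <= n')%N then m (inord i) else 0%N) | i < n.+1].

Definition truncm (m : 'X_{1..n.+1}) : 'X_{1..n'.+1} :=
  [multinom m (widen_ord (Hn : (n'.+1 <= n.+1)%N) i) | i < n'.+1].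

Lemma big_extm (Rt : Type) (idx : Rt) (op : Monoid.com_law idx) (G : nat -> Rt)
  (G0 : G 0%N = idx) (m : 'X_{1..n'.+1}) :
  \big[op/idx]_(i < n.+1) G (extm m i) = \big[op/idx]_(i < n'.+1) G (m i).
Proof.
rewrite (bigID (fun i : 'I_n.+1 => (i < n'.+1)%N)) /=.
rewrite [X in op _ X]big1 ?Monoid.mulm1; last first.
  by move=> i; rewrite mnmE ltnS => /negbTE ->.
rewrite (big_ord_narrow (Hn : (n'.+1 <= n.+1)%N)).
apply: eq_bigr => i _; rewrite mnmE /= -ltnS ltn_ord.
by congr (G (m _)); apply: val_inj; rewrite /= inordK.
Qed.

Lemma mdeg_extm m : mdeg (extm m) = mdeg m.
Proof. by rewrite !mdegE (@big_extm _ _ _ (fun k : nat => k) erefl). Qed.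

Lemma extm_inj : injective extm.
Proof.
move=> m1 m2 /mnmP E; apply/mnmP => i.
have := E (widen_ord (Hn : (n'.+1 <= n.+1)%N) i); rewrite !mnmE /= -ltnS ltn_ord.
by have -> : inord i = i by apply: val_inj; rewrite /= inordK.
Qed.

Definition rtup : n.+1.-tuple (hpoly R n') :=
  [tuple (if (i <= n')%N then Xvar (inord i : 'I_n'.+1) else 0) | i < n.+1].

Lemma restrictE (p : hpoly R n) : restrict_poly n' p = comp_mpoly rtup p.
Proof. by []. Qed.

Lemma restrictX (m : 'X_{1..n.+1}) :
  restrict_poly n' ('X_[m] : hpoly R n) =
  if [forall i : 'I_n.+1, (n' < i)%N ==> (m i == 0%N)] then 'X_[truncm m] else 0.
Proof.
rewrite restrictE comp_mpolyX.
rewrite (bigID (fun i : 'I_n.+1 => (i < n'.+1)%N)) /=.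
have -> : \prod_(i < n.+1 | ~~ (i < n'.+1)%N) tnth rtup i ^+ m i =
   if [forall i : 'I_n.+1, (n' < i)%N ==> (m i == 0%N)] then 1 else 0.
  case: ifP => [/forallP H|/negbT].
    apply: big1 => i; rewrite ltnS -ltnNge => Hi.
    by move: (H i); rewrite Hi /= => /eqP ->; rewrite expr0.
  rewrite negb_forall => /existsP [i]; rewrite negb_imply => /andP [Hi Hm].
  rewrite (bigD1 i) /=; last by rewrite ltnS -ltnNge.
  rewrite tnth_map tnth_ord_tuple leqNgt Hi /= expr0n (negbTE Hm) mul0r //.
case: ifP => _; last by rewrite mulr0.
rewrite mulr1 (big_ord_narrow (Hn : (n'.+1 <= n.+1)%N)) [RHS]mpolyXE_id.
apply: eq_bigr => i _; rewrite tnth_map tnth_ord_tuple /= -ltnS ltn_ord mnmE.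
by congr (Xvar _ ^+ _); apply: val_inj; rewrite /= inordK.
Qed.

Lemma extm_eqE (m : 'X_{1..n.+1}) m' :
  (m == extm m') = [forall i : 'I_n.+1, (n' < i)%N ==> (m i == 0%N)] && (truncm m == m').
Proof.
apply/eqP/andP => [->|[/forallP H /eqP <-]].
  split; first by apply/forallP => i; apply/implyP => Hi; rewrite mnmE leqNgt Hi.
  apply/eqP/mnmP => i; rewrite !mnmE /= -ltnS ltn_ord.
  by congr (m' _); apply: val_inj; rewrite /= inordK.
apply/mnmP => i; rewrite !mnmE; case: ifP => Hi.
  by congr (m _); apply: val_inj; rewrite /= inordK.
by move: (H i); rewrite ltnNge Hi /= => /eqP.
Qed.

Lemma coef_restrictX (m : 'X_{1..n.+1}) m' :
  (restrict_poly n' ('X_[m] : hpoly R n))@_m' = (m == extm m')%:R.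
Proof.
rewrite restrictX extm_eqE; case: ifP => _ /=; last by rewrite mcoeff0.
by rewrite mcoeffX.
Qed.

Lemma coef_restrict (p : hpoly R n) m' :
  (restrict_poly n' p)@_m' = p@_(extm m').
Proof.
transitivity ((\sum_(m <- msupp p) p@_m *: 'X_[m])@_(extm m')); last by rewrite -mpolyE.
rewrite restrictE comp_mpolyEX !raddf_sum /=.
apply: eq_bigr => m _.
by rewrite !mcoeffZ -restrictE coef_restrictX mcoeffX.
Qed.


Lemma restrict_deriv (p : hpoly R n) k : (k <= n')%N ->
  restrict_poly n' (p^`M(inord k : 'I_n.+1)) = (restrict_poly n' p)^`M(inord k : 'I_n'.+1).
Proof.
move=> Hk; have Hk' : (k < n.+1)%N by rewrite ltnS (leq_trans Hk Hn).
apply/mpolyP => m'; rewrite coef_restrict !mcoeff_deriv coef_restrict.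
have -> : extm (m' + U_(inord k))%MM = (extm m' + U_(inord k))%MM.
  apply/mnmP => i; rewrite (@mnmDE n.+1 i (extm m')) !mnmE; case: ifP => Hi.
    by congr (_ + nat_of_bool _)%N; rewrite -!val_eqE /= !inordK // ltnS.
  rewrite -val_eqE /= inordK //; case: eqP => // E; by move: Hi; rewrite -E Hk.
by rewrite mnmE inordK // Hk.
Qed.

Lemma meval_restrict (p : hpoly R n) :
  meval (@qpt R n') (restrict_poly n' p) = meval (@qpt R n) p.
Proof.
rewrite restrictE comp_mpoly_meval; apply: meval_eq => i.
rewrite tnth_map tnth_ord_tuple /qpt; case: ifP => Hi.
  by rewrite /Xvar mevalXU -!val_eqE /= inordK // ltnS.
rewrite meval0 -val_eqE /=; case: eqP => // E; by move: Hi; rewrite E.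
Qed.

Definition gext (g' : 'M[R]_n'.+1) : 'M[R]_n.+1 :=
  \matrix_(i, j) if ((i <= n')%N && (j <= n')%N) then g' (inord i) (inord j)
                 else (i == j)%:R.

Lemma sum_delta (i : 'I_n.+1) (G : 'I_n.+1 -> R) :
  \sum_(k < n.+1) (i == k)%:R * G k = G i.
Proof.
rewrite (bigD1 i) //= eqxx mul1r big1 ?addr0 // => k Hk.
by rewrite eq_sym (negbTE Hk) mul0r.
Qed.

Lemma gextE g' a k : gext g' a k = (if ((a <= n')%N && (k <= n')%N) then g' (inord a) (inord k)
                 else (a == k)%:R).
Proof. by rewrite /gext mxE. Qed.

Lemma gext_orth g' : orthogonal_mx g' -> orthogonal_mx (gext g').
Proof.
rewrite /orthogonal_mx => /matrixP H; apply/matrixP => i j.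
have -> : (gext g' *m (gext g')^T) i j = \sum_k gext g' i k * gext g' j k.
  by rewrite mxE; apply: eq_bigr => k _; rewrite [(gext g')^T k j]mxE.
rewrite [RHS]mxE.
have key : forall a b : 'I_n.+1, ~~ (a <= n')%N ->
    \sum_(k < n.+1) (gext g' a k * gext g' b k) = (a == b)%:R.
  move=> a b Ha.
  under eq_bigr do rewrite gextE (negbTE Ha) /=.
  by rewrite sum_delta gextE (negbTE Ha) andbF eq_sym.
case Hi: (i <= n')%N; last by rewrite key // Hi.
case Hj: (j <= n')%N; last first.
  rewrite (eq_bigr (fun k => gext g' j k * gext g' i k)); last by move=> k _; rewrite mulrC.
  by rewrite key ?Hj // eq_sym.
rewrite (bigID (fun k : 'I_n.+1 => (k < n'.+1)%N)) /=.
rewrite [X in _ + X]big1 ?addr0; last first.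
  move=> k Hk; rewrite !gextE; rewrite !ltnS in Hk; rewrite (negbTE Hk) !andbF.
  have -> : (i == k) = false by apply/negbTE; apply: contraNneq Hk => <-.
  by rewrite mul0r.
rewrite (big_ord_narrow (Hn : (n'.+1 <= n.+1)%N)).
have -> : (i == j) = (inord i == inord j :> 'I_n'.+1) by rewrite -!val_eqE /= !inordK ?ltnS.
have := H (inord i) (inord j); rewrite !mxE => <-.
apply: eq_bigr => k _; rewrite [g'^T _ _]mxE !gextE /= Hi Hj -ltnS ltn_ord /=.
by congr (g' _ _ * g' _ _); apply: val_inj; rewrite /= inordK.
Qed.

End Alg.

Lemma orth_inv (R : realType) m (g : 'M[R]_m.+1) : orthogonal_mx g -> invmx g = g^T.
Proof.
move=> H; have [Hu _] := mulmx1_unit H.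
by rewrite -[invmx g]mulmx1 -H mulmxA mulVmx // mul1mx.
Qed.

Lemma comp_mpoly_comp k1 k2 k3 (R : comNzRingType) (lf : k2.-tuple {mpoly R[k3]})
  (lg : k1.-tuple {mpoly R[k2]}) p :
  comp_mpoly lf (comp_mpoly lg p) = comp_mpoly [tuple comp_mpoly lf (tnth lg i) | i < k1] p.
Proof.
rewrite [comp_mpoly lg p]comp_mpolyEX [in RHS]comp_mpolyEX raddf_sum /=.
apply: eq_bigr => m _; rewrite linearZ /= !comp_mpolyX rmorph_prod /=.
congr (_ *: _); apply: eq_bigr => i _.
by rewrite rmorphXn tnth_map tnth_ord_tuple.
Qed.

Lemma restrict_Oact (R : realType) n n' (Hn : (n' <= n)%N) (g' : 'M[R]_n'.+1) p :
  orthogonal_mx g' ->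
  restrict_poly n' (Oact (@gext R n n' g') p) = Oact g' (restrict_poly n' p).
Proof.
move=> Hg; rewrite /Oact (orth_inv (@gext_orth R n n' Hn g' Hg)) (orth_inv Hg) /restrict_poly.
rewrite !comp_mpoly_comp; congr comp_mpoly; apply: eq_from_tnth => i.
rewrite !tnth_map !tnth_ord_tuple /Xvar raddf_sum /=.
under eq_bigr do rewrite linearZ /= comp_mpolyXU -tnth_nth tnth_map tnth_ord_tuple mxE gextE.
case Hi: (i <= n')%N; last first.
  rewrite raddf0; apply: big1 => j _; rewrite andbF.
  case Hj: (j <= n')%N; last by rewrite scaler0.
  have -> : (j == i) = false by apply/negbTE; apply: contraFneq Hi => <-.
  by rewrite scale0r.
rewrite comp_mpolyXU -tnth_nth tnth_map tnth_ord_tuple.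
rewrite (bigID (fun k : 'I_n.+1 => (k < n'.+1)%N)) /=.
rewrite [X in _ + X]big1 ?addr0; last first.
  by move=> k; rewrite ltnS => /negbTE ->; rewrite scaler0.
rewrite (big_ord_narrow (Hn : (n'.+1 <= n.+1)%N)).
apply: eq_bigr => k _; rewrite /= -ltnS ltn_ord /= [g'^T _ _]mxE.
have -> : (inord k : 'I_n'.+1) = k by apply: val_inj; rewrite /= inordK.
by [].
Qed.

Section Meas.
Context {R : realType}.

Definition fib (I I' : Type) (e : I' -> I) (A : I' -> set R) : I -> set R :=
  fun i => [set x | forall j, e j = i -> A j x].

Lemma fibE (I I' : Type) (e : I' -> I) (A : I' -> set R) j :
  injective e -> fib e A (e j) = A j.
Proof.
move=> ie; apply/seteqP; split => x /=; first by apply.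
by move=> Ax j' /ie ->.
Qed.

Lemma fib_meas (I I' : Type) (e : I' -> I) (A : I' -> set R) i :
  injective e -> (forall j, measurable (A j)) -> measurable (fib e A i).
Proof.
move=> ie mA; have [[j <-]|H] := pselect (exists j, e j = i).
  by rewrite fibE.
rewrite (_ : fib e A i = setT) //; apply/seteqP; split => // x _ j Hj.
by exfalso; apply: H; exists j.
Qed.

Lemma rects_pre (I I' : Type) (e : I' -> I) (B : set (I' -> R)) :
  injective e -> <<s (@rects R I') >> B ->
  <<s (@rects R I) >> ((fun c : I -> R => c \o e) @^-1` B).
Proof.
move=> ie HB.
have SA : sigma_algebra setT
    (image_set_system setT (fun c : I -> R => c \o e) <<s (@rects R I) >>).
  by apply: sigma_algebra_image; apply: smallest_sigma_algebra.
have sub : @rects R I' `<=`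
    image_set_system setT (fun c : I -> R => c \o e) <<s (@rects R I) >>.
  move=> _ [A [mA ->]]; rewrite /image_set_system /= setTI; apply: sub_sigma_algebra.
  exists (fib e A); split; first by move=> i; apply: fib_meas.
  apply/seteqP; split => c /=.
    by move=> H i j <-; apply: H.
  by move=> H j; apply: (H (e j)).
by have := smallest_sub SA sub HB; rewrite /image_set_system /= setTI.
Qed.

End Meas.

Section Final.
Context {R : realType}.
Variables (n n' d : nat).
Hypothesis Hn : (n' <= n)%N.

Lemma extd_proof (m : dmon n' d) : mdeg (extm n (val m)) == d.
Proof. by rewrite (mdeg_extm Hn); case: m. Qed.

Definition extd (m : dmon n' d) : dmon n d := exist _ (extm n (val m)) (extd_proof m).

Lemma extd_inj : injective extd.
Proof.
move=> m1 m2 /(congr1 val) /= /(extm_inj Hn) E; exact: val_inj.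
Qed.

Lemma coefvec_restrict (p : hpoly R n) :
  @coefvec R n' d (restrict_poly n' p) = @coefvec R n d p \o extd.
Proof. by apply/funext => m; rewrite /coefvec /coefm /= (coef_restrict Hn). Qed.

Lemma same_law_restrict dT (T : measurableType dT) (P : probability T R)
  (G1 G2 : T -> hpoly R n) :
  same_law P d G1 G2 ->
  same_law P d (fun w => restrict_poly n' (G1 w)) (fun w => restrict_poly n' (G2 w)).
Proof.
move=> HG B HB.
have E : forall G : T -> hpoly R n,
    (fun w => @coefvec R n' d (restrict_poly n' (G w))) @^-1` B =
    (fun w => @coefvec R n d (G w)) @^-1` ((fun c : dmon n d -> R => c \o extd) @^-1` B).
  by move=> G; apply/seteqP; split => w /=; rewrite coefvec_restrict.
rewrite !E; apply: HG; apply: rects_pre => //; exact: extd_inj.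
Qed.

End Final.

Theorem lemma4p7 (R : realType) (dT : measure_display) (T : measurableType dT)
  (P : probability T R) (d n n' : nat) (F : T -> hpoly R n) :
  (0 < n')%N -> (n' <= n)%N ->
  (* f is a random element of H_{d,n} *)
  (forall w, in_H d (F w)) ->
  (forall m : mpoly.multinom n.+1, measurable_fun setT (fun w => coefm m (F w))) ->
  (* f is centered *)
  (forall m : dmon n d, 'E_P[fun w => coefm (val m) (F w)]%E = 0%E) ->
  (* f has O(n+1)-Oinvariant distribution *)
  Oinvariant P d F ->
  let F' := fun w => restrict_poly n' (F w) in
  Oinvariant P d F' /\
  (forall k : nat, (1 <= k <= n')%N -> delta_param P F' k = delta_param P F k) /\
  (kostlan_distributed P d F -> kostlan_distributed P d F').
Proof.
move=> _ Hn HH _ _ HO F'; split; [|split].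
- move=> g' Hg'.
  have := same_law_restrict Hn (HO _ (gext_orth Hn Hg')).
  have -> : (fun w => restrict_poly n' (Oact (gext n g') (F w))) =
            (fun w => Oact g' (F' w)).
    by apply/funext => w; rewrite restrict_Oact.
  by [].
- move=> k /andP [_ Hk]; rewrite /delta_param.
  have -> : (fun w => ((mpoly.meval (@qpt R n') (mpoly.mderiv (inord k) (F' w))) ^+ 2)%R) =
            (fun w => ((mpoly.meval (@qpt R n) (mpoly.mderiv (inord k) (F w))) ^+ 2)%R).
    by apply/funext => w; rewrite /F' -restrict_deriv // meval_restrict.
  have -> : (fun w => ((mpoly.meval (@qpt R n') (F' w)) ^+ 2)%R) =
            (fun w => ((mpoly.meval (@qpt R n) (F w)) ^+ 2)%R).
    by apply/funext => w; rewrite /F' meval_restrict.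
  by [].
- move=> [HK1 [HK2 HK3]]; split; [|split].
  + move=> w m' Hm; rewrite /F' (coef_restrict Hn); apply: HK1.
    by rewrite (mdeg_extm Hn).
  + move=> J A uJ mA.
    have uJ' : uniq (map (extd Hn) J) by rewrite (map_inj_uniq (@extd_inj _ _ _ Hn)).
    have E := HK2 (map (extd Hn) J) (fib (extd Hn) A) uJ' (fun i => fib_meas i (@extd_inj _ _ _ Hn) mA).
    have -> : [set w | forall i, i \in J -> A i (coefm (val i) (F' w))] =
      [set w | forall i, i \in map (extd Hn) J ->
               fib (extd Hn) A i (coefm (val i) (F w))].
      apply/seteqP; split => w /= H.
        move=> i /mapP [j Jj ->]; rewrite (fibE _ _ (@extd_inj _ _ _ Hn)).
        by rewrite /coefm -(coef_restrict Hn); apply: H.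
      move=> i Ji; have := H (extd Hn i) (map_f _ Ji).
      by rewrite (fibE _ _ (@extd_inj _ _ _ Hn)) /coefm (coef_restrict Hn).
    rewrite E big_map; apply: eq_bigr => i _.
    rewrite (fibE _ _ (@extd_inj _ _ _ Hn)).
    have -> : (fun w => coefm (val i) (F' w)) = (fun w => coefm (val (extd Hn i)) (F w)).
      by apply/funext => w; rewrite /coefm /F' (coef_restrict Hn).
    by [].
  + move=> m A mA.
    have -> : (fun w => coefm (val m) (F' w)) = (fun w => coefm (val (extd Hn m)) (F w)).
      by apply/funext => w; rewrite /coefm /F' (coef_restrict Hn).
    rewrite (HK3 (extd Hn m) A mA).
    have -> : (\prod_(i < n.+1) (val (extd Hn m) i)`!)%N = (\prod_(i < n'.+1) (val m i)`!)%N.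
      exact: (@big_extm n n' Hn _ _ _ factorial erefl (val m)).
    by [].
Qed.
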